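(* Consider $T$ rounds in which, in round $1$, each agent $i$ receives her entitlement $e_i$, and in each round $t\ge2$ the allocation $a_t$ is the MMF output for entitlements $e$ and some reported demands $d_{1t},\dots,d_{nt}\ge0$. Let $d^*_{it}\ge0$ be agent $i$'s true demand in round $t$. Then $\sum_{t=1}^T\ell(d^*_t,a_t)\le 1+\sum_{i=1}^n\sum_{t=2}^T(a_{it}-d^*_{it})^++\sum_{i=1}^n\sum_{t=2}^T\mathbf{1}(a_{it}=d_{it})(d^*_{it}-a_{it})^+.$
   Context: A divisible resource of size $1$ is shared by $n$ agents with entitlements $e_i>0$, $\sum_ie_i=1$. MMF$(e,d)$ on reported demands $d_1,\dots,d_n\ge0$: set $r=1$, $E=1$, $S=\{1,\dots,n\}$, $a=0$; process agents $j$ in ascending order of $d_j/e_j$; if $d_j<re_j/E$, set $a_j=d_j$, remove $j$ from $S$, $r\leftarrow r-d_j$, $E\leftarrow E-e_j$ and continue; otherwise set $a_k=re_k/E$ for all $k\in S$ and stop; output $a$. For $d,a\in\mathbb{R}_+^n$: $\ell_{ur}(a)=1-\sum_ia_i$, $\ell_{or}(d,a)=\sum_i(a_i-d_i)^+$, $\ell_{ud}(d,a)=\sum_i(d_i-a_i)^+$, $\ell(d,a)=\min(\ell_{ur}(a)+\ell_{or}(d,a),\ell_{ud}(d,a))$. *)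

(* Defs.v *)
From mathcomp Require Import all_boot all_order all_algebra.
Set Implicit Arguments. Unset Strict Implicit. Unset Printing Implicit Defensive.
Import Order.TTheory GRing.Theory Num.Theory.
Local Open Scope ring_scope.

Section MMF.
Variables (R : realFieldType) (n : nat).

Definition pos (x : R) : R := Num.max x 0.

(* One pass of MMF over the remaining (sorted) agents l, with remaining
   resource r and remaining entitlement E.  The remaining set S is exactly l. *)
Fixpoint mmf_aux (e d : 'I_n -> R) (l : seq 'I_n) (r E : R) : 'I_n -> R :=
  match l with
  | [::] => fun _ => 0
  | j :: l' =>
      if d j < r * e j / E then
        fun k => if k == j then d j else mmf_aux e d l' (r - d j) (E - e j) k
      else fun k => if k \in l then r * e k / E else 0
  end.

Definition mmf_order (e d : 'I_n -> R) : seq 'I_n :=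
  sort (fun i j => d i / e i <= d j / e j) (enum 'I_n).

Definition MMF (e d : 'I_n -> R) : 'I_n -> R := mmf_aux e d (mmf_order e d) 1 1.

Definition loss_ur (a : 'I_n -> R) : R := 1 - \sum_i a i.
Definition loss_or (d a : 'I_n -> R) : R := \sum_i pos (a i - d i).
Definition loss_ud (d a : 'I_n -> R) : R := \sum_i pos (d i - a i).
Definition loss (d a : 'I_n -> R) : R :=
  Num.min (loss_ur a + loss_or d a) (loss_ud d a).

End MMF.

(* Main.v *)
Require Import Defs.
From mathcomp Require Import all_boot all_order all_algebra.
Import Order.TTheory GRing.Theory Num.Theory.
Local Open Scope ring_scope.

Lemma mmf_aux_prop (R : realFieldType) (n : nat) (e d : 'I_n -> R) :
  (forall i, 0 < e i) ->
  forall (l : seq 'I_n) r E, uniq l -> E = \sum_(k <- l) e k ->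
  let f := mmf_aux e d l r E in
  (forall k, k \notin l -> f k = 0) /\
  ((\sum_(k <- l) f k = r) \/ (forall k, k \in l -> f k = d k)).
Proof.
move=> epos; elim=> [|j l IH] r E /= Hu HE.
  by split => // ; right.
move/andP: Hu => [jl ul].
case: ifP => Hd.
  have [IH1 IH2] := IH (r - d j) (E - e j) ul
      ltac:(by rewrite HE big_cons addrC addKr).
  split.
    move=> k; rewrite in_cons negb_or => /andP [kj kl].
    by rewrite (negbTE kj) IH1.
  rewrite big_cons eqxx.
  have -> : \sum_(k <- l) (if k == j then d j else
               mmf_aux e d l (r - d j) (E - e j) k) =
            \sum_(k <- l) mmf_aux e d l (r - d j) (E - e j) k.
    rewrite big_seq_cond [RHS]big_seq_cond; apply: eq_bigr => k /andP [kl _].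
    by case: eqP => // kj; move: jl; rewrite -kj kl.
  case: IH2 => [-> | H]; first by left; rewrite addrC subrK.
  right => k; rewrite in_cons; case: eqP => [-> //|kj] /= kl.
  by apply: H.
split.
  by move=> k; rewrite in_cons => /negbTE ->.
left.
have -> : \sum_(k <- j :: l) (if k \in j :: l then r * e k / E else 0) =
          \sum_(k <- j :: l) r * e k / E.
  by rewrite big_seq_cond [RHS]big_seq_cond; apply: eq_bigr => k /andP [-> _].
have E0 : 0 < E.
  rewrite HE big_cons; apply: ltr_wpDr; last exact: epos.
  by apply: sumr_ge0 => i _; apply: ltW.
rewrite -mulr_suml -mulr_sumr -HE -mulrA divff ?mulr1 //.
by rewrite gt_eqF.
Qed.

Lemma MMF_prop (R : realFieldType) (n : nat) (e d : 'I_n -> R) :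
  (forall i, 0 < e i) -> \sum_i e i = 1 ->
  (\sum_i MMF e d i = 1) \/ (forall i, MMF e d i = d i).
Proof.
move=> epos esum.
have pl : perm_eq (mmf_order e d) (enum 'I_n) by rewrite /mmf_order perm_sort.
have ul : uniq (mmf_order e d) by rewrite (perm_uniq pl) enum_uniq.
have [_ H] := @mmf_aux_prop R n e d epos _ 1 _ ul
   ltac:(by rewrite (perm_big _ pl) /= big_enum /= esum).
case: H => [H|H]; [left|right].
  by rewrite (perm_big _ pl) /= big_enum in H.
by move=> i; apply: H; rewrite (perm_mem pl) mem_enum.
Qed.

Lemma pos_ge0 (R : realFieldType) (x : R) : 0 <= pos x.
Proof. by rewrite /pos le_max lexx orbT. Qed.

Theorem lemma2 (R : realFieldType) (n T : nat) (e : 'I_n -> R)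
  (d dstar a : nat -> 'I_n -> R) :
  (forall i, 0 < e i) -> \sum_i e i = 1 ->
  (forall t i, (2 <= t <= T)%N -> 0 <= d t i) ->
  (forall t i, (1 <= t <= T)%N -> 0 <= dstar t i) ->
  a 1%N = e ->
  (forall t, (2 <= t <= T)%N -> a t = MMF e (d t)) ->
  \sum_(1 <= t < T.+1) loss (dstar t) (a t) <=
    1 + \sum_i \sum_(2 <= t < T.+1) pos (a t i - dstar t i)
      + \sum_i \sum_(2 <= t < T.+1)
          ((a t i == d t i)%:R * pos (dstar t i - a t i)).
Proof.
move=> epos esum _ dsp a1 aM.
have S1 : 0 <= \sum_i \sum_(2 <= t < T.+1) pos (a t i - dstar t i).
  by apply: sumr_ge0 => i _; apply: sumr_ge0 => t _; apply: pos_ge0.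
have S2 : 0 <= \sum_i \sum_(2 <= t < T.+1)
          ((a t i == d t i)%:R * pos (dstar t i - a t i)).
  by apply: sumr_ge0 => i _; apply: sumr_ge0 => t _;
     apply: mulr_ge0 => //; apply: pos_ge0.
case: T aM dsp S1 S2 => [|T] aM dsp S1 S2.
  rewrite big_geq //; apply: addr_ge0 => //; apply: addr_ge0 => //.
rewrite big_ltn // [X in _ <= 1 + X + _]exchange_big [X in _ <= _ + X]exchange_big /=.
rewrite -addrA -big_split /=; apply: lerD.
  rewrite a1 /loss; rewrite ge_min; apply/orP; left.
  rewrite /loss_ur esum subrr add0r /loss_or -esum.
  apply: ler_sum => i _; rewrite /pos ge_max (ltW (epos i)) andbT.
  by rewrite lerBlDr lerDl dsp.
rewrite big_nat_cond [X in _ <= X]big_nat_cond.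
apply: ler_sum => t /andP [/andP [t2 tT] _].
have tT' : (2 <= t <= T.+1)%N by rewrite t2 -ltnS.
rewrite (aM t tT') /loss.
have B2 : 0 <= \sum_i ((MMF e (d t) i == d t i)%:R * pos (dstar t i - MMF e (d t) i)).
  by apply: sumr_ge0 => i _; apply: mulr_ge0 => //; apply: pos_ge0.
have B1 : 0 <= \sum_i pos (MMF e (d t) i - dstar t i).
  by apply: sumr_ge0 => i _; apply: pos_ge0.
case: (@MMF_prop R n e (d t) epos esum) => [H|H].
  rewrite ge_min; apply/orP; left.
  by rewrite /loss_ur H subrr add0r /loss_or lerDl.
rewrite ge_min; apply/orP; right.
rewrite -[X in X <= _]add0r; apply: lerD => //.
apply: ler_sum => i _; by rewrite H eqxx mul1r.
Qed.
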